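(* Let $\tau=(\tau_1,\dots,\tau_\ell)$ be a tuple of positive integers, $0\le k\le\ell$, and $\hat P_\tau=C\sqcup O$ the $k$-decomposition. Let $p_i,p'_i\in Y^i$ for $1\le i\le k$ and $a,a'\in Y^{k+1}$, and put $p_{k+1}=a$, $p'_{k+1}=a'$. Let $F$ be the face of $\mathcal{O}_{C,O}(\tau)$ on which both chain inequalities $x_{p_1}+\dots+x_{p_k}\le x_a$ and $x_{p'_1}+\dots+x_{p'_k}\le x_{a'}$ hold with equality. Let $I=\{i\in\{1,\dots,k+1\}: p_i\neq p'_i\}$ and define $\tau'=(\tau'_1,\dots,\tau'_\ell)$ by $\tau'_j=\tau_j-1$ if $j\in I$ and $\tau'_j=\tau_j$ otherwise. Identify $\hat P_{\tau'}$ with the induced subposet $\hat P_\tau\setminus\{p'_i: i\in I\}$ and let $\hat P_{\tau'}=C''\sqcup O''$ be its $k$-decomposition. Let $F'$ be the face of $\mathcal{O}_{C'',O''}(\tau')$ on which the chain inequality $x_{p_1}+\dots+x_{p_k}\le x_a$ holds with equality. Then the coordinate projection forgetting the coordinates $x_{p'_i}$, $i\in I$, is an affine isomorphism $\nu:F\to F'$. Moreover, each coordinate projected away contributes exactly one to the codimension: the codimension of $F$ in $\mathcal{O}_{C,O}(\tau)$ equals the codimension of $F'$ in $\mathcal{O}_{C'',O''}(\tau')$ plus $|I|$.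
   Context: The poset $P_\tau$ has elements $y^i_j$ ($1\le i\le\ell$, $1\le j\le\tau_i$) with $y^i_j<y^{i'}_{j'}$ iff $i<i'$; $Y^i=\{y^i_1,\dots,y^i_{\tau_i}\}$; $|\tau|=\sum_i\tau_i$. $\hat P_\tau=P_\tau\cup\{\hat0,\hat1\}$ with new minimum $\hat0$ and maximum $\hat1$, $Y^0=\{\hat0\}$, $Y^{\ell+1}=\{\hat1\}$; $\prec$ is the covering relation. For $0\le k\le\ell$ the $k$-decomposition is $C=Y^0\cup\dots\cup Y^k$, $O=Y^{k+1}\cup\dots\cup Y^{\ell+1}$. The chain-order polytope $\mathcal{O}_{C,O}(\tau)\subseteq\mathbb{R}^{\hat P_\tau}$ consists of all $x$ with $x_{\hat0}=0$, $x_{\hat1}=1$, $x_p\ge0$ for $p\in C$, $x_a\le x_b$ for $a,b\in O$ with $a\prec b$, and $x_{p_1}+\dots+x_{p_k}\le x_q$ for all $p_i\in Y^i$ ($1\le i\le k$), $q\in Y^{k+1}$ (chain inequalities). The same definitions apply to any tuple of positive integers in place of $\tau$. The codimension of a face $F$ of $\mathcal{O}_{C,O}(\tau)$ is $|\tau|-\dim F$. *)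

(* Defs.v *)
From HB Require Import structures.
From mathcomp Require Import all_boot all_order all_algebra.
From Stdlib Require Import ClassicalEpsilon.
Set Implicit Arguments. Unset Strict Implicit. Unset Printing Implicit Defensive.
Import Order.TTheory GRing.Theory Num.Theory.
Local Open Scope ring_scope.

(* The poset P_tau: elements y^i_j, i.e. pairs (level index i, j < tau_i).
   Levels are 0-based in the type: the tag i : 'I_(size tau) is level i+1. *)
Definition Ptau (tau : seq nat) : finType :=
  {i : 'I_(size tau) & 'I_(nth 0%N tau i)}.

Definition Phat (tau : seq nat) : finType := option (option (Ptau tau)).

Definition hat0 {tau : seq nat} : Phat tau := None.
Definition hat1 {tau : seq nat} : Phat tau := Some None.

(* level q = i  iff  q \in Y^i  (Y^0 = {hat0}, Y^(l+1) = {hat1}). *)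
Definition level {tau : seq nat} (q : Phat tau) : nat :=
  match q with
  | None => 0%N
  | Some None => (size tau).+1
  | Some (Some p) => (tag p).+1
  end.

Definition hlt {tau : seq nat} (q r : Phat tau) : bool := (level q < level r)%N.

Definition covers {tau : seq nat} (q r : Phat tau) : bool :=
  hlt q r && [forall c : Phat tau, ~~ (hlt q c && hlt c r)].

(* pp : 'I_k.+1 -> hat P_tau encodes (p_1, ..., p_k, p_(k+1)) with p_i in Y^i
   (the 0-based index i stands for the paper's index i+1). *)
Definition is_chain {tau : seq nat} {k : nat} (pp : 'I_k.+1 -> Phat tau) : Prop :=
  forall i : 'I_k.+1, level (pp i) = i.+1.

Definition chain_sum {R : realFieldType} {tau : seq nat} {k : nat}
  (x : {ffun Phat tau -> R}) (pp : 'I_k.+1 -> Phat tau) : R :=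
  \sum_(i < k.+1 | i != ord_max) x (pp i).

(* The chain-order polytope O_{C,O}(tau) for the k-decomposition
   C = Y^0 u ... u Y^k, O = Y^(k+1) u ... u Y^(l+1). *)
Definition chain_order_polytope (R : realFieldType) (tau : seq nat) (k : nat)
  (x : {ffun Phat tau -> R}) : Prop :=
  [/\ x hat0 = 0, x hat1 = 1,
      (forall q : Phat tau, (level q <= k)%N -> 0 <= x q),
      (forall q r : Phat tau, (k < level q)%N -> (k < level r)%N ->
          covers q r -> x q <= x r) &
      (forall pp : 'I_k.+1 -> Phat tau, is_chain pp ->
          chain_sum x pp <= x (pp ord_max))].

Definition pb (P : Prop) : bool := if excluded_middle_informative P then true else false.

Definition aff_indep {R : realFieldType} {T : finType} {d : nat}
  (v : 'I_d.+1 -> {ffun T -> R}) : Prop :=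
  forall c : 'I_d.+1 -> R,
    \sum_(i < d.+1) c i = 0 ->
    (forall t : T, \sum_(i < d.+1) c i * v i t = 0) ->
    forall i, c i = 0.

(* affine dimension of a (nonempty) set S in R^T: the largest d such that S
   contains d+1 affinely independent points (d <= #|T| always). *)
Definition affdim {R : realFieldType} {T : finType} (S : {ffun T -> R} -> Prop) : nat :=
  \max_(d < #|T|.+1 |
        pb (exists v : 'I_d.+1 -> {ffun T -> R}, (forall i, S (v i)) /\ aff_indep v)) d.

Definition codim {R : realFieldType} (tau : seq nat) (F : {ffun Phat tau -> R} -> Prop) : int :=
  (sumn tau)%:Z - (affdim F)%:Z.

Definition reduce_tau (tau : seq nat) (k : nat) (pp pp' : 'I_k.+1 -> Phat tau) : seq nat :=
  mkseq (fun j => (nth 0%N tau j -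
                   nat_of_bool ((j < k.+1)%N && (pp (@inord k j) != pp' (@inord k j))))%N)
        (size tau).
Arguments reduce_tau : clear implicits.
Arguments codim {R} tau F.
Arguments chain_order_polytope : clear implicits.

(* Main.v *)
Require Import Defs.
From HB Require Import structures.
From mathcomp Require Import all_boot all_order all_algebra.
From Stdlib Require Import Classical ClassicalEpsilon.
Set Implicit Arguments. Unset Strict Implicit. Unset Printing Implicit Defensive.
Import Order.TTheory GRing.Theory Num.Theory.
Local Open Scope ring_scope.

Lemma aff_indep_bound (R : realFieldType) (T : finType) (d : nat)
  (v : 'I_d.+1 -> {ffun T -> R}) : aff_indep v -> (d <= #|T|)%N.
Proof.
move=> Hv.
pose M : 'M[R]_(d, #|T|) :=
  \matrix_(i < d, j < #|T|) (v (lift ord0 i) (enum_val j) - v ord0 (enum_val j)).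
have : row_free M.
  apply: inj_row_free => u Hu.
  pose c := fun i : 'I_d.+1 => if unlift ord0 i is Some j then u 0 j
                               else - \sum_(j < d) u 0 j.
  have c0 : c ord0 = - \sum_(j < d) u 0 j by rewrite /c unlift_none.
  have cS : forall j, c (lift ord0 j) = u 0 j by move=> j; rewrite /c liftK.
  have Hc : forall i, c i = 0.
    apply: Hv.
      by rewrite big_ord_recl c0 (eq_bigr _ (fun j _ => cS j)) addNr.
    move=> t; rewrite big_ord_recl c0 (eq_bigr _ (fun j _ => congr1 (fun a => a * _) (cS j))).
    have := congr1 (fun A : 'M_(1, #|T|) => A 0 (enum_rank t)) Hu.
    rewrite !mxE /= => H.
    rewrite -[RHS]H mulNr mulr_suml addrC -sumrB; apply: eq_bigr => j _.
    by rewrite mxE enum_rankK mulrBr.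
  apply/matrixP => i j; rewrite mxE (ord1 i) -cS; exact: Hc.
rewrite /row_free => /eqP <-; exact: rank_leq_col.
Qed.

Lemma level_hat0 (tau : seq nat) (z : Phat tau) : level z = 0%N -> z = hat0.
Proof. by case: z => [[p|]|]. Qed.

Lemma level_hat1 (tau : seq nat) (z : Phat tau) : level z = (size tau).+1 -> z = hat1.
Proof.
case: z => [[p|]|] //= [] H; have := ltn_ord (tag p); by rewrite H ltnn.
Qed.

Lemma covers_tr (tau tau' : seq nat) (f : Phat tau -> Phat tau') (h : Phat tau' -> Phat tau)
  (q r : Phat tau) :
  (forall q, level (f q) = level q) -> (forall c, level (h c) = level c) ->
  covers q r -> covers (f q) (f r).
Proof.
move=> Hf Hh; rewrite /covers /hlt !Hf => /andP[-> /forallP H] /=.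
apply/forallP => c; apply/negP => /andP[a b].
by have := H (h c); rewrite Hh a b.
Qed.

Lemma chain_tr (tau tau' : seq nat) (k : nat) (f : Phat tau -> Phat tau')
  (pp : 'I_k.+1 -> Phat tau) :
  (forall q, level (f q) = level q) -> is_chain pp -> is_chain (f \o pp).
Proof. by move=> Hf Hp i /=; rewrite Hf. Qed.

Lemma poly_tr (R : realFieldType) (tau tau' : seq nat) (k : nat)
  (f : Phat tau' -> Phat tau) (h : Phat tau -> Phat tau')
  (x : {ffun Phat tau -> R}) :
  size tau' = size tau ->
  (forall q, level (f q) = level q) -> (forall c, level (h c) = level c) ->
  chain_order_polytope R tau k x ->
  chain_order_polytope R tau' k [ffun q => x (f q)].
Proof.
move=> Hs Hf Hh [H0 H1 Hn Hc Hch]; split.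
- by rewrite ffunE (@level_hat0 _ (f hat0)) // Hf.
- by rewrite ffunE (@level_hat1 _ (f hat1)) // Hf /= Hs.
- by move=> q Hq; rewrite ffunE; apply: Hn; rewrite Hf.
- move=> q r Hq Hr Hqr; rewrite !ffunE; apply: Hc; rewrite ?Hf //.
  exact: (covers_tr Hf Hh).
- move=> p0 Hp0; rewrite ffunE.
  have -> : chain_sum [ffun q => x (f q)] p0 = chain_sum x (f \o p0).
    by apply: eq_bigr => i _; rewrite ffunE.
  exact: (Hch _ (chain_tr Hf Hp0)).
Qed.

Lemma swap_le (R : realFieldType) (tau : seq nat) (k : nat)
  (x : {ffun Phat tau -> R}) (pp pp' : 'I_k.+1 -> Phat tau) (i : 'I_k.+1) :
  chain_order_polytope R tau k x -> is_chain pp -> is_chain pp' ->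
  chain_sum x pp = x (pp ord_max) ->
  (i != ord_max -> x (pp' i) <= x (pp i)) /\ (i = ord_max -> x (pp i) <= x (pp' i)).
Proof.
move=> [_ _ _ _ Hch] Hp Hp' Ht.
pose c := fun j => if j == i then pp' i else pp j.
have Hc : is_chain c by move=> j; rewrite /c; case: eqP => [->|]; [exact: Hp'|].
have H := Hch _ Hc; rewrite /chain_sum /c in Ht H; split.
- move=> Hi; rewrite (bigD1 i Hi) /= in Ht; rewrite (bigD1 i Hi) /= eqxx in H.
  have E : (ord_max == i) = false by apply/eqP => E; rewrite E eqxx in Hi.
  rewrite E in H.
  rewrite (eq_bigr (fun j => x (pp j))) in H; last by move=> j /andP[_ /negbTE ->].
  by rewrite -Ht lerD2r in H.
- move=> Hi; subst i; rewrite eqxx in H.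
  rewrite (eq_bigr (fun j => x (pp j))) in H; last by move=> j /negbTE ->.
  by rewrite Ht in H.
Qed.

Lemma max_restr (P : nat -> bool) (N M : nat) : (M <= N)%N ->
  (forall d, P d -> d <= M)%N ->
  (\max_(d < N.+1 | P d) d = \max_(d < M.+1 | P d) d)%N.
Proof.
move=> MN HP; apply/eqP; rewrite eqn_leq; apply/andP; split.
- apply/bigmax_leqP => d Pd.
  have dM : (d < M.+1)%N by rewrite ltnS HP.
  exact: (@leq_bigmax_cond _ _ (fun d : 'I_M.+1 => val d) (Ordinal dM)).
- apply/bigmax_leqP => d Pd.
  have dM : (d < N.+1)%N by rewrite ltnS (leq_trans (HP _ Pd)).
  exact: (@leq_bigmax_cond _ _ (fun d : 'I_N.+1 => val d) (Ordinal dM)).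
Qed.

Lemma sumn_reduce (tau : seq nat) (k : nat) (pp pp' : 'I_k.+1 -> Phat tau) :
  all (fun t => 0 < t)%N tau -> (k <= size tau)%N ->
  is_chain pp -> is_chain pp' ->
  (sumn (reduce_tau tau k pp pp') + #|[set i : 'I_k.+1 | pp i != pp' i]| = sumn tau)%N.
Proof.
move=> Hpos Hk Hp Hp'.
pose b := fun j => nat_of_bool ((j < k.+1)%N && (pp (@inord k j) != pp' (@inord k j))).
have Hb : forall j, (j < size tau)%N -> (b j <= nth 0%N tau j)%N.
  move=> j Hj; have := all_nthP 0%N Hpos j Hj; rewrite /b; by case: (_ && _).
have E2 : sumn (reduce_tau tau k pp pp') = (\sum_(0 <= j < size tau) (nth 0%N tau j - b j))%N.
  by rewrite /reduce_tau sumnE /mkseq big_map /index_iota subn0.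
have E1 : sumn tau = (\sum_(0 <= j < size tau) nth 0%N tau j)%N.
  by rewrite sumnE (big_nth 0%N).
have E3 : (\sum_(0 <= j < size tau) nth 0%N tau j = 
    \sum_(0 <= j < size tau) (nth 0%N tau j - b j) + \sum_(0 <= j < size tau) b j)%N.
  rewrite -big_split /=; rewrite big_nat_cond [RHS]big_nat_cond.
  by apply: eq_bigr => j /andP[/andP[_ Hj] _]; rewrite subnK // Hb.
have E4 : #|[set i : 'I_k.+1 | pp i != pp' i]| = (\sum_(0 <= j < k.+1) b j)%N.
  rewrite -sum1_card big_mkcond /= big_mkord; apply: eq_bigr => i _.
  by rewrite in_set /b ltn_ord inord_val /=; case: (_ != _).
have Hbs : b (size tau) = 0%N.
  rewrite /b; case: ltnP => //= Hs.
  have Ek : size tau = k by apply/eqP; rewrite eqn_leq Hk -ltnS Hs.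
  have L : forall (p : 'I_k.+1 -> Phat tau), is_chain p -> p (inord (size tau)) = hat1.
    move=> p Hc; apply: level_hat1; rewrite Hc inordK //.
  by rewrite (L _ Hp) (L _ Hp') eqxx.
have E5 : (\sum_(0 <= j < size tau) b j = \sum_(0 <= j < k.+1) b j)%N.
  have := @big_nat_recr _ 0%N addn (size tau) 0%N b (leq0n _).
  rewrite Hbs => H; rewrite -[LHS]addn0 -H.
  rewrite (big_cat_nat _ (n := k.+1)) //=.
  rewrite [X in (_ + X)%N](_ : _ = 0%N) ?addn0 //.
  rewrite big_nat_cond big1 // => j /andP[/andP[Hj _] _].
  by rewrite /b ltnNge Hj.
by rewrite E2 E4 -E5 E1 E3.
Qed.

Theorem proposition3p7 (R : realFieldType) (tau : seq nat) (k : nat)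
  (pp pp' : 'I_k.+1 -> Phat tau)
  (e : Phat (reduce_tau tau k pp pp') -> Phat tau)
  (qq : 'I_k.+1 -> Phat (reduce_tau tau k pp pp')) :
  all (fun t => 0 < t)%N tau ->
  (k <= size tau)%N ->
  is_chain pp -> is_chain pp' ->
  (* e identifies hat P_tau' with hat P_tau minus {p'_i : i in I} *)
  injective e ->
  (forall q, level (e q) = level q) ->
  (forall z : Phat tau, (exists q, e q = z) <-> ~ (exists i, pp i != pp' i /\ z = pp' i)) ->
  (* qq i is p_i (resp. a) seen in hat P_tau' *)
  (forall i, e (qq i) = pp i) ->
  let F := fun x : {ffun Phat tau -> R} =>
    [/\ chain_order_polytope R tau k x,
        chain_sum x pp = x (pp ord_max) &
        chain_sum x pp' = x (pp' ord_max)] in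
  let F' := fun y : {ffun Phat (reduce_tau tau k pp pp') -> R} =>
    chain_order_polytope R (reduce_tau tau k pp pp') k y /\
    chain_sum y qq = y (qq ord_max) in
  let nu := fun x : {ffun Phat tau -> R} => [ffun q => x (e q)] in
  [/\ (forall x, F x -> F' (nu x)),
      (forall x1 x2, F x1 -> F x2 -> nu x1 = nu x2 -> x1 = x2),
      (forall y, F' y -> exists2 x, F x & nu x = y) &
      codim tau F = codim (reduce_tau tau k pp pp') F' + (#|[set i : 'I_k.+1 | pp i != pp' i]|)%:Z].
Proof.
move=> Hpos Hk Hp Hp' einj elev Himg Hqq F F' nu.
have Hsz : size (reduce_tau tau k pp pp') = size tau by rewrite size_mkseq.
have Hcase : forall z, (exists q, e q = z) \/ (exists i, z = pp' i).
  move=> z; case: (classic (exists q, e q = z)) => [h|h]; [by left|right].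
  have : ~ ~ (exists i, pp i != pp' i /\ z = pp' i) by move=> H; apply: h; apply/Himg.
  by move=> /NNPP [i [_ ->]]; exists i.
pose g := fun z : Phat tau => if [pick q | e q == z] is Some q then q
  else if [pick i | pp' i == z] is Some i then qq i else hat0.
have gE : forall q, g (e q) = q.
  move=> q; rewrite /g; case: pickP => [q' /eqP/einj //|/(_ q)]; by rewrite eqxx.
have levinj : forall i j : 'I_k.+1, pp' i = pp' j -> i = j.
  move=> i j E; apply/val_inj/eqP; by rewrite -eqSS -(Hp' i) -(Hp' j) E.
have gpp' : forall i, g (pp' i) = qq i.
  move=> i; rewrite /g; case: pickP => [q /eqP Hq | Hn].
  - case: (eqVneq (pp i) (pp' i)) => [Ei | Ni].
      by apply: einj; rewrite Hq Hqq Ei.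
    exfalso; apply: ((proj1 (Himg (pp' i))) (ex_intro _ q Hq)); by exists i.
  - case: pickP => [j /eqP /levinj -> // | /(_ i)]; by rewrite eqxx.
have gpp : forall i, g (pp i) = qq i by move=> i; rewrite -Hqq gE.
have glev : forall z, level (g z) = level z.
  move=> z; case: (Hcase z) => [[q <-]|[i ->]]; first by rewrite gE elev.
  by rewrite gpp' -(elev (qq i)) Hqq Hp Hp'.
have HFeq : forall x, F x -> forall i, x (pp' i) = x (pp i).
  move=> x [Hx Ht Ht'] i.
  have [A1 A2] := swap_le i Hx Hp Hp' Ht.
  have [B1 B2] := swap_le i Hx Hp' Hp Ht'.
  case: (eqVneq i ord_max) => [Ei | Ni]; apply/eqP; rewrite eq_le.
    by rewrite A2 // B2.
  by rewrite A1 // B1.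
have HG3 : forall x, F x -> forall z, x z = x (e (g z)).
  move=> x Fx z; case: (Hcase z) => [[q <-]|[i ->]]; first by rewrite gE.
  by rewrite gpp' Hqq HFeq.
have P1 : forall x, F x -> F' (nu x).
  move=> x [Hx Ht Ht']; split; first exact: (poly_tr Hsz elev glev Hx).
  rewrite /chain_sum /nu ffunE Hqq -Ht; apply: eq_bigr => i _; by rewrite ffunE Hqq.
have P3 : forall y, F' y -> F [ffun z => y (g z)].
  move=> y [Hy Ht]; split.
  - exact: (poly_tr (esym Hsz) glev elev Hy).
  - rewrite /chain_sum ffunE gpp -Ht; apply: eq_bigr => i _; by rewrite ffunE gpp.
  - rewrite /chain_sum ffunE gpp' -Ht; apply: eq_bigr => i _; by rewrite ffunE gpp'.
split => //.
- move=> x1 x2 H1 H2 E; apply/ffunP => z; rewrite (HG3 _ H1) (HG3 _ H2).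
  by have := congr1 (fun f => fun_of_fin f (g z)) E; rewrite /nu !ffunE.
- move=> y Fy; exists [ffun z => y (g z)]; first exact: P3.
  by apply/ffunP => q; rewrite /nu !ffunE gE.
pose P' := fun d : nat => pb (exists w : 'I_d.+1 -> {ffun Phat (reduce_tau tau k pp pp') -> R},
   (forall i, F' (w i)) /\ aff_indep w).
have Hd : forall d : nat, pb (exists v : 'I_d.+1 -> {ffun Phat tau -> R},
   (forall i, F (v i)) /\ aff_indep v) = P' d.
  move=> d; rewrite /P' /pb.
  case: excluded_middle_informative => [[v [Fv Iv]]|N1];
    case: excluded_middle_informative => [[w [Fw Iw]]|N2] //.
  + exfalso; apply: N2; exists (fun i => nu (v i)); split; first by move=> i; apply: P1.
    move=> c Hc Ht; apply: Iv => // t.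
    rewrite (eq_bigr (fun i => c i * v i (e (g t)))); last by move=> i _; rewrite -HG3.
    move: (Ht (g t)) => H; rewrite -[RHS]H; apply: eq_bigr => i _; by rewrite /nu ffunE.
  + exfalso; apply: N1; exists (fun i => [ffun z => w i (g z)]); split; first by move=> i; apply: P3.
    move=> c Hc Ht; apply: Iw => // q.
    move: (Ht (e q)) => H; rewrite -[RHS]H; apply: eq_bigr => i _; by rewrite ffunE gE.
have A1 : affdim F = (\max_(d < #|Phat tau|.+1 | P' d) d)%N.
  by rewrite /affdim; apply: eq_bigl => d; rewrite Hd.
have A2 : affdim F' = (\max_(d < #|Phat (reduce_tau tau k pp pp')|.+1 | P' d) d)%N by [].
have A : affdim F = affdim F'.
  rewrite A1 A2; apply: max_restr; first exact: leq_card einj.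
  move=> d; rewrite /P' /pb; case: excluded_middle_informative => // [[w [_ Iw]]] _.
  exact: aff_indep_bound Iw.
rewrite /codim A -(sumn_reduce Hpos Hk Hp Hp') PoszD.
by rewrite addrAC.
Qed.
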